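(* Let $G$ be a countable disconnected graph. Suppose there is an infinite sequence $(H_n)_{n<\omega}$ of pairwise distinct non-trivial connected components of $G$ such that $H_n$ embeds into $H_m$ whenever $n\le m$. Then $G$ has infinitely many pairwise non-isomorphic disconnected siblings.
   Context: Graphs are undirected and loopless. $G$ embeds into $G'$ if $G$ is isomorphic to an induced subgraph of $G'$; $G,G'$ are equimorphic if each embeds into the other; a sibling of $G$ is a graph equimorphic to $G$. A connected component is trivial if it consists of a single vertex. *)

(* Defs.v *)
From Stdlib Require Import Relations.

Record graph : Type := Graph {
  vert :> Type;
  adj : vert -> vert -> Prop;
  adj_sym : forall x y, adj x y -> adj y x;
  adj_irrefl : forall x, ~ adj x x
}.

Arguments adj {g} _ _.

Definition countable_graph (G : graph) : Prop :=
  exists f : G -> nat, forall x y, f x = f y -> x = y.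

Definition embeds (G G' : graph) : Prop :=
  exists f : G -> G',
    (forall x y, f x = f y -> x = y) /\
    (forall x y, adj x y <-> adj (f x) (f y)).

Definition equimorphic (G G' : graph) : Prop := embeds G G' /\ embeds G' G.

Definition sibling (G G' : graph) : Prop := equimorphic G' G.

Definition isomorphic (G G' : graph) : Prop :=
  exists (f : G -> G') (g : G' -> G),
    (forall x, g (f x) = x) /\ (forall y, f (g y) = y) /\
    (forall x y, adj x y <-> adj (f x) (f y)).

Definition conn (G : graph) : G -> G -> Prop := clos_refl_trans G (@adj G).

Definition connected (G : graph) : Prop :=
  (exists x : G, True) /\ forall x y : G, conn G x y.

Definition disconnected (G : graph) : Prop :=
  exists x y : G, ~ conn G x y.

Definition induced (G : graph) (P : G -> Prop) : graph.
Proof.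
  refine (@Graph {x : G | P x} (fun x y => adj (proj1_sig x) (proj1_sig y)) _ _).
  - intros x y; apply adj_sym.
  - intros x; apply adj_irrefl.
Defined.

Definition component (G : graph) (v : G) : graph := induced G (conn G v).

Definition nontrivial_component (G : graph) (v : G) : Prop :=
  exists w : G, conn G v w /\ w <> v.

(* Main.v *)
Require Import Defs.
From Stdlib Require Import Relations Classical ClassicalEpsilon ProofIrrelevance Lia List Arith.

Lemma sig_ext {A} {P : A -> Prop} (a b : {x | P x}) : proj1_sig a = proj1_sig b -> a = b.
Proof. destruct a, b; simpl; intros ->; f_equal; apply proof_irrelevance. Qed.

Lemma conn_refl (G : graph) x : conn G x x. Proof. apply rt_refl. Qed.
Lemma conn_trans (G : graph) x y z : conn G x y -> conn G y z -> conn G x z.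
Proof. eapply rt_trans. Qed.
Lemma conn_sym (G : graph) x y : conn G x y -> conn G y x.
Proof. induction 1; [apply rt_step, adj_sym; auto | apply rt_refl | eapply rt_trans; eauto]. Qed.
Lemma conn_adj (G : graph) x y z : conn G x y -> adj y z -> conn G x z.
Proof. intros; eapply rt_trans; [eassumption| apply rt_step; auto]. Qed.

Definition isol (G : graph) (x : G) := forall y, ~ adj x y.
Lemma isol_conn (G : graph) x y : isol G x -> conn G x y -> x = y.
Proof. intros Hi H; revert Hi; induction H; intros Hi.
 - exfalso; eapply Hi; eauto.
 - auto.
 - assert (x = y) by auto; subst; auto. Qed.

Lemma nt_not_isol (G : graph) (v: nat -> G) n y : nontrivial_component G (v n) -> conn G (v n) y -> ~ isol G y.
Proof. intros [w [Hw Hne]] Hy Hi. apply conn_sym in Hy. pose proof (isol_conn _ _ _ Hi Hy) as E. subst y.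
  apply Hne. symmetry; eapply isol_conn; eauto. Qed.

Lemma comp_uniq (G : graph) (v : nat -> G) (Hd: forall n m, n<>m -> ~conn G (v n)(v m)) a b z :
  conn G (v a) z -> conn G (v b) z -> a = b.
Proof. intros; destruct (Nat.eq_dec a b); auto; exfalso; eapply Hd; eauto; eapply conn_trans; eauto; apply conn_sym; auto. Qed.

Definition Espec (G : graph) (v : nat -> G) (E : nat -> nat -> G -> G) := forall n m, n <= m ->
 (forall x, conn G (v n) x -> conn G (v m) (E n m x)) /\
 (forall x y, conn G (v n) x -> conn G (v n) y -> E n m x = E n m y -> x = y) /\
 (forall x y, conn G (v n) x -> conn G (v n) y -> (adj x y <-> adj (E n m x) (E n m y))).

Lemma E_exists (G : graph) (v : nat -> G) (He : forall n m, n <= m -> embeds (component G (v n)) (component G (v m))) n m :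
 exists g : G -> G, n <= m -> (forall x, conn G (v n) x -> conn G (v m) (g x)) /\ (forall x y, conn G (v n) x -> conn G (v n) y -> g x = g y -> x = y) /\ (forall x y, conn G (v n) x -> conn G (v n) y -> (adj x y <-> adj (g x) (g y))).
Proof.
 destruct (le_dec n m) as [l|l]; [|exists (fun x => x); intro; contradiction].
 destruct (He n m l) as [f [fi fa]].
 exists (fun x => match excluded_middle_informative (conn G (v n) x) with left p => proj1_sig (f (exist _ x p)) | right _ => x end).
 intros _; split; [|split].
 - intros x Hx. destruct excluded_middle_informative; [|contradiction]. exact (proj2_sig (f _)).
 - intros x y Hx Hy. do 2 destruct excluded_middle_informative; try contradiction. intro e. apply sig_ext in e. apply fi in e. apply (f_equal (@proj1_sig _ _)) in e. exact e.
 - intros x y Hx Hy. do 2 destruct excluded_middle_informative; try contradiction. exact (fa (exist _ x c) (exist _ y c0)).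
Qed.

Lemma E_get (G : graph) (v : nat -> G) (He : forall n m, n <= m -> embeds (component G (v n)) (component G (v m))) :
  exists E, Espec G v E.
Proof.
  exists (fun n m => proj1_sig (constructive_indefinite_description _ (E_exists G v He n m))).
  intros n m l. exact (proj2_sig (constructive_indefinite_description _ (E_exists G v He n m)) l).
Qed.

Definition idx (G : graph) (v : nat -> G) (x : G) : option nat :=
  match excluded_middle_informative (exists n, conn G (v n) x) with
  | left h => Some (proj1_sig (constructive_indefinite_description _ h))
  | right _ => None end.

Lemma idx_Some (G : graph) (v : nat -> G) (Hd: forall n m, n<>m -> ~conn G (v n)(v m)) x n :
  conn G (v n) x -> idx G v x = Some n.
Proof. intro H. unfold idx. destruct excluded_middle_informative as [h|h].
 - destruct constructive_indefinite_description as [m Hm]; simpl. f_equal; eapply comp_uniq; eauto.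
 - exfalso; eauto. Qed.
Lemma idx_None (G : graph) (v : nat -> G) x : idx G v x = None -> forall n, ~ conn G (v n) x.
Proof. unfold idx. destruct excluded_middle_informative as [h|h]; [discriminate|]. intros _ n H; eauto. Qed.
Lemma idx_Some' (G : graph) (v : nat -> G) x n : idx G v x = Some n -> conn G (v n) x.
Proof. unfold idx. destruct excluded_middle_informative as [h|h]; [|discriminate].
 destruct constructive_indefinite_description as [m Hm]; simpl. intro e; injection e; intros <-; auto. Qed.

Definition Phi (G : graph) (v : nat -> G) (E : nat -> nat -> G -> G) (s : nat -> nat) (x : G) : G :=
  match idx G v x with Some n => E n (s n) x | None => x end.

Lemma Phi_in (G : graph) (v : nat -> G) (Hd: forall n m, n<>m -> ~conn G (v n)(v m)) E
  (HE : Espec G v E) s (Hs1 : forall n, n <= s n) m x :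
  conn G (v m) (Phi G v E s x) -> exists n, s n = m /\ conn G (v n) x /\ conn G (v (s n)) (Phi G v E s x).
Proof.
  unfold Phi. destruct (idx G v x) eqn:I.
  - intro H. apply idx_Some' in I. pose proof (proj1 (HE n (s n) (Hs1 n)) x I) as H2.
    exists n; repeat split; auto. eapply comp_uniq; eauto.
  - intro H. exfalso. eapply idx_None; eauto.
Qed.

Lemma Phi_comp (G : graph) (v : nat -> G) E (HE : Espec G v E) s (Hs1 : forall n, n <= s n) x n :
  conn G (v n) x -> idx G v x = Some n -> conn G (v (s n)) (Phi G v E s x).
Proof. intros H I. unfold Phi. rewrite I. apply (proj1 (HE n (s n) (Hs1 n)) x H). Qed.

Lemma Phi_none (G : graph) (v : nat -> G) E s x m :
  idx G v x = None -> ~ conn G (v m) (Phi G v E s x).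
Proof. intro I. unfold Phi. rewrite I. apply idx_None; auto. Qed.

Lemma Phi_inj (G : graph) (v : nat -> G) (Hd: forall n m, n<>m -> ~conn G (v n)(v m)) E
  (HE : Espec G v E) s (Hs1 : forall n, n <= s n) (Hs2 : forall a b, s a = s b -> a = b) x y :
  Phi G v E s x = Phi G v E s y -> x = y.
Proof.
  destruct (idx G v x) eqn:Ix; destruct (idx G v y) eqn:Iy.
  - pose proof (idx_Some' _ _ _ _ Ix) as Hx. pose proof (idx_Some' _ _ _ _ Iy) as Hy.
    pose proof (Phi_comp G v E HE s Hs1 x n Hx Ix) as Cx.
    pose proof (Phi_comp G v E HE s Hs1 y n0 Hy Iy) as Cy.
    intro e. rewrite e in Cx. assert (n = n0) by (apply Hs2; eapply comp_uniq; eauto). subst n0.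
    unfold Phi in e. rewrite Ix, Iy in e. eapply (proj1 (proj2 (HE n (s n) (Hs1 n)))); eauto.
  - pose proof (idx_Some' _ _ _ _ Ix) as Hx.
    pose proof (Phi_comp G v E HE s Hs1 x n Hx Ix) as Cx.
    intro e. rewrite e in Cx. exfalso; eapply Phi_none; eauto.
  - pose proof (idx_Some' _ _ _ _ Iy) as Hy.
    pose proof (Phi_comp G v E HE s Hs1 y n Hy Iy) as Cy.
    intro e. rewrite <- e in Cy. exfalso; eapply Phi_none; eauto.
  - unfold Phi; rewrite Ix, Iy; auto.
Qed.

Lemma Phi_adj1 (G : graph) (v : nat -> G) (Hd: forall n m, n<>m -> ~conn G (v n)(v m)) E
  (HE : Espec G v E) s (Hs1 : forall n, n <= s n) (Hs2 : forall a b, s a = s b -> a = b) x y :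
  adj x y -> adj (Phi G v E s x) (Phi G v E s y).
Proof.
  intro A.
  destruct (idx G v x) eqn:Ix.
  - pose proof (idx_Some' _ _ _ _ Ix) as Hx.
    assert (Hy : conn G (v n) y) by (eapply conn_adj; eauto).
    pose proof (idx_Some _ _ Hd _ _ Hy) as Iy.
    unfold Phi; rewrite Ix, Iy. apply (proj2 (proj2 (HE n (s n) (Hs1 n))) x y Hx Hy); auto.
  - destruct (idx G v y) eqn:Iy.
    + exfalso. pose proof (idx_Some' _ _ _ _ Iy) as Hy.
      eapply (idx_None _ _ _ Ix n). eapply conn_adj; eauto. apply adj_sym; auto.
    + unfold Phi; rewrite Ix, Iy; auto.
Qed.

Lemma Phi_adj2 (G : graph) (v : nat -> G) (Hd: forall n m, n<>m -> ~conn G (v n)(v m)) E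
  (HE : Espec G v E) s (Hs1 : forall n, n <= s n) (Hs2 : forall a b, s a = s b -> a = b) x y :
  adj (Phi G v E s x) (Phi G v E s y) -> adj x y.
Proof.
  intro A.
  destruct (idx G v x) eqn:Ix.
  - pose proof (idx_Some' _ _ _ _ Ix) as Hx.
    pose proof (Phi_comp G v E HE s Hs1 x n Hx Ix) as Cx.
    assert (Cy : conn G (v (s n)) (Phi G v E s y)) by (eapply conn_adj; eauto).
    destruct (Phi_in G v Hd E HE s Hs1 _ _ Cy) as [m [e [Hy _]]].
    apply Hs2 in e. subst m.
    pose proof (idx_Some _ _ Hd _ _ Hy) as Iy.
    unfold Phi in A; rewrite Ix, Iy in A. apply (proj2 (proj2 (HE n (s n) (Hs1 n))) x y Hx Hy); auto.
  - destruct (idx G v y) eqn:Iy.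
    + exfalso. pose proof (idx_Some' _ _ _ _ Iy) as Hy.
      pose proof (Phi_comp G v E HE s Hs1 y n Hy Iy) as Cy.
      eapply (Phi_none G v E s x (s n) Ix). eapply conn_adj; eauto. apply adj_sym; auto.
    + unfold Phi in A; rewrite Ix, Iy in A; auto.
Qed.

Definition NI (G : graph) := {x : G | ~ isol G x}.
Definition Sadj (G : graph) (k : nat) (a b : NI G + {m | m < k}) : Prop :=
  match a, b with inl x, inl y => adj (proj1_sig x) (proj1_sig y) | _, _ => False end.
Lemma Sadj_sym (G : graph) k a b : Sadj G k a b -> Sadj G k b a.
Proof. destruct a, b; simpl; auto. apply adj_sym. Qed.
Lemma Sadj_irr (G : graph) k a : ~ Sadj G k a a.
Proof. destruct a; simpl; auto. apply adj_irrefl. Qed.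
Definition Sg (G : graph) k : graph := Graph _ (Sadj G k) (Sadj_sym G k) (Sadj_irr G k).

Lemma v_inj (G : graph) (v : nat -> G) (Hd: forall n m, n<>m -> ~conn G (v n)(v m)) a b : v a = v b -> a = b.
Proof. intro e. apply (comp_uniq G v Hd a b (v b)); [rewrite e|]; apply conn_refl. Qed.

Lemma v_nadj (G : graph) (v : nat -> G) (Hd: forall n m, n<>m -> ~conn G (v n)(v m)) a b : ~ adj (v a) (v b).
Proof. intro A. assert (a = b). { apply (comp_uniq G v Hd a b (v b)); [apply rt_step; auto | apply conn_refl]. }
  subst. eapply adj_irrefl; eauto. Qed.

Lemma emb1 (G : graph) (v : nat -> G) (Hd: forall n m, n<>m -> ~conn G (v n)(v m)) E
  (HE : Espec G v E) k : embeds (Sg G k) G.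
Proof.
  set (s := fun n => n + k).
  assert (Hs1 : forall n, n <= s n) by (intro; unfold s; lia).
  assert (Hs2 : forall a b, s a = s b -> a = b) by (unfold s; intros; lia).
  exists (fun a : Sg G k => match a with inl x => Phi G v E s (proj1_sig x) | inr i => v (proj1_sig i) end).
  assert (K : forall x (i : {m | m < k}), ~ conn G (v (proj1_sig i)) (Phi G v E s x)).
  { intros x [i Hi] C. simpl in C. destruct (Phi_in G v Hd E HE s Hs1 _ _ C) as [n [e _]]. unfold s in e. lia. }
  split.
  - intros [x|i] [y|j]; simpl; intro e.
    + f_equal. apply sig_ext. eapply Phi_inj; eauto.
    + exfalso. apply (K (proj1_sig x) j). rewrite e. apply conn_refl.
    + exfalso. apply (K (proj1_sig y) i). rewrite <- e. apply conn_refl.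
    + f_equal. apply sig_ext. eapply v_inj; eauto.
  - intros [x|i] [y|j]; simpl; split; try tauto.
    + apply Phi_adj1; auto.
    + apply Phi_adj2; auto.
    + intro A. apply (K (proj1_sig x) j). apply rt_step. apply adj_sym; auto.
    + intro A. apply (K (proj1_sig y) i). apply rt_step. auto.
    + apply v_nadj; auto.
Qed.

Lemma emb2 (G : graph) (v : nat -> G) (Hd: forall n m, n<>m -> ~conn G (v n)(v m)) E
  (HE : Espec G v E) (Hnt : forall n, nontrivial_component G (v n))
  (c : G -> nat) (Hc : forall x y, c x = c y -> x = y) k : embeds G (Sg G k).
Proof.
  set (s := fun n => S (2 * n)).
  assert (Hs1 : forall n, n <= s n) by (intro; unfold s; lia).
  assert (Hs2 : forall a b, s a = s b -> a = b) by (unfold s; intros; lia).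
  set (f := fun x => match excluded_middle_informative (isol G x) with
                     | left _ => v (2 * c x) | right _ => Phi G v E s x end).
  assert (fni : forall x, ~ isol G (f x)).
  { intro x. unfold f. destruct excluded_middle_informative as [i|i].
    - eapply nt_not_isol; eauto. apply conn_refl.
    - destruct (idx G v x) eqn:I.
      + eapply nt_not_isol; [apply (Hnt (s n))|]. eapply Phi_comp; eauto. eapply idx_Some'; eauto.
      + unfold Phi. rewrite I. auto. }
  assert (K : forall x y, ~ isol G y -> ~ conn G (v (2 * c x)) (Phi G v E s y)).
  { intros x y _ C. destruct (Phi_in G v Hd E HE s Hs1 _ _ C) as [n [e _]]. unfold s in e. lia. }
  exists (fun x => (inl (exist _ (f x) (fni x)) : Sg G k)).
  split.
  - intros x y e. injection e. clear e. intro e.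
    revert e. unfold f.
    destruct excluded_middle_informative as [ix|ix]; destruct excluded_middle_informative as [iy|iy]; intro e.
    + apply v_inj in e; auto. apply Hc. lia.
    + exfalso. apply (K x y iy). rewrite e. apply conn_refl.
    + exfalso. apply (K y x ix). rewrite <- e. apply conn_refl.
    + eapply Phi_inj; eauto.
  - intros x y. simpl. unfold f.
    destruct excluded_middle_informative as [ix|ix]; destruct excluded_middle_informative as [iy|iy]; split; intro A.
    + exfalso; eapply ix; eauto.
    + exfalso; eapply v_nadj; eauto.
    + exfalso; eapply ix; eauto.
    + exfalso. apply (K x y iy). apply rt_step. auto.
    + exfalso; eapply iy; apply adj_sym; eauto.
    + exfalso. apply (K y x ix). apply rt_step. apply adj_sym; auto.
    + apply Phi_adj1; auto.
    + eapply Phi_adj2; eauto.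
Qed.

Lemma ph q : forall p (phi : nat -> nat), (forall m, m < q -> phi m < p) ->
  (forall a b, a < q -> b < q -> phi a = phi b -> a = b) -> q <= p.
Proof.
  induction q; intros p phi H1 H2; [lia|].
  assert (phi q < p) by (apply H1; lia).
  assert (q <= p - 1); [|lia].
  apply (IHq (p-1) (fun m => if phi m <? phi q then phi m else phi m - 1)).
  - intros m Hm. assert (phi m <> phi q) by (intro; assert (m = q) by (apply H2; lia); lia).
    pose proof (H1 m ltac:(lia)). destruct (Nat.ltb_spec (phi m) (phi q)); lia.
  - intros a b Ha Hb.
    assert (phi a <> phi q) by (intro; assert (a = q) by (apply H2; lia); lia).
    assert (phi b <> phi q) by (intro; assert (b = q) by (apply H2; lia); lia).
    destruct (Nat.ltb_spec (phi a) (phi q)); destruct (Nat.ltb_spec (phi b) (phi q)); intro; apply H2; lia.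
Qed.

Lemma noniso (G : graph) k1 k2 (lt : k2 < k1) (f : Sg G k1 -> Sg G k2) (g : Sg G k2 -> Sg G k1)
  (gf : forall x, g (f x) = x) (fg : forall y, f (g y) = y)
  (fa : forall x y, adj x y <-> adj (f x) (f y)) : False.
Proof.
  assert (claim : forall m (H : m < k1), exists t, f (inr (exist _ m H)) = inr t).
  { intros m H. destruct (f (inr (exist _ m H))) as [a|t] eqn:F; [exfalso|eauto].
    destruct a as [a0 Ha0]. unfold isol in Ha0.
    destruct (not_all_not_ex _ _ Ha0) as [y Ay].
    assert (Hy : ~ isol G y) by (intro Hi; exact (Hi a0 (adj_sym _ _ _ Ay))).
    set (b := (inl (exist _ y Hy) : Sg G k2)).
    pose proof (proj2 (fa (inr (exist _ m H)) (g b))) as X.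
    rewrite F, fg in X. exact (X Ay). }
  set (phi := fun m => match lt_dec m k1 with
     | left H => match f (inr (exist _ m H)) with inr t => proj1_sig t | inl _ => 0 end
     | right _ => 0 end).
  assert (k1 <= k2); [|lia].
  apply (ph k1 k2 phi).
  - intros m Hm. unfold phi. destruct lt_dec as [l|l]; [|lia].
    destruct (claim m l) as [t Ht]. rewrite Ht. exact (proj2_sig t).
  - intros a b Ha Hb. unfold phi. destruct lt_dec as [la|la]; [|lia]. destruct lt_dec as [lb|lb]; [|lia].
    destruct (claim a la) as [t1 H1]. destruct (claim b lb) as [t2 H2]. rewrite H1, H2.
    intro e. apply sig_ext in e. subst t2. rewrite <- H2 in H1.
    apply (f_equal g) in H1. rewrite !gf in H1. injection H1. auto.
Qed.

Lemma Sg_conn (G : graph) (v : nat -> G) k (a b : Sg G k) : conn (Sg G k) a b ->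
  conn G (match a with inl x => proj1_sig x | inr _ => v 0 end)
         (match b with inl x => proj1_sig x | inr _ => v 0 end).
Proof.
  induction 1.
  - destruct x, y; simpl in *; try contradiction. apply rt_step; auto.
  - apply rt_refl.
  - eapply rt_trans; eauto.
Qed.

Theorem lemma2p3 (G : graph) (v : nat -> vert G) :
  countable_graph G ->
  disconnected G ->
  (forall n m, n <> m -> ~ conn G (v n) (v m)) ->
  (forall n, nontrivial_component G (v n)) ->
  (forall n m, n <= m -> embeds (component G (v n)) (component G (v m))) ->
  exists S : nat -> graph,
    (forall i, sibling G (S i) /\ disconnected (S i)) /\
    (forall i j, i <> j -> ~ isomorphic (S i) (S j)).
Proof.
  intros [c Hc] _ Hd Hnt He.
  destruct (E_get G v He) as [E HE].
  exists (Sg G). split.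
  - intro i. split.
    + split; [apply (emb1 G v Hd E HE) | apply (emb2 G v Hd E HE Hnt c Hc)].
    + assert (N0 : ~ isol G (v 0)) by (eapply nt_not_isol; eauto; apply conn_refl).
      assert (N1 : ~ isol G (v 1)) by (eapply nt_not_isol; eauto; apply conn_refl).
      exists (inl (exist _ (v 0) N0)), (inl (exist _ (v 1) N1)).
      intro C. apply (Sg_conn G v) in C. simpl in C. exact (Hd 0 1 ltac:(lia) C).
  - intros i j ne [f [g [gf [fg fa]]]].
    destruct (lt_dec j i) as [l|l].
    + exact (noniso G i j l f g gf fg fa).
    + refine (noniso G j i ltac:(lia) g f fg gf _).
      intros x y. rewrite fa, !fg. tauto.
Qed.
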